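(* Let $d\in\mathbb{N}$ and let $\mathcal{P}$ be a partition of $\mathbb{R}^{d}$. Suppose there exists $D\in(0,\infty)$ such that $D$ is a strict pairwise bound for every $X\in\mathcal{P}$, and suppose there exists $\vec{\alpha}\in\mathbb{R}^{d}$ such that $\vec{\alpha}+[0,D]^{d}$ intersects only finitely many members of $\mathcal{P}$. Then there exists $\vec{p}\in\mathbb{R}^{d}$ such that $|\mathcal{N}_{\overline{0}}(\vec{p})|\geq d+1$. Furthermore, $\mathcal{P}$ contains a $(d+1)$-clique.
   Context: On $\mathbb{R}^d$ use $d_{max}(\vec{x},\vec{y})=\max_i|x_i-y_i|$. $D$ is a strict pairwise bound for a set $X$ if $d_{max}(\vec{x},\vec{y})<D$ for all $\vec{x},\vec{y}\in X$. For $\vec{p}\in\mathbb{R}^d$, $\mathcal{N}_{\overline{0}}(\vec{p})=\{X\in\mathcal{P}:\vec{p}\in\overline{X}\}$ ($\overline{X}$ the closure). Members $X,Y$ are adjacent if $\overline{X}\cap\overline{Y}\ne\emptyset$; an $n$-clique is a set of $n$ distinct pairwise adjacent members. *)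

(* Defs.v *)
From HB Require Import structures.
From mathcomp Require Import all_boot all_order all_algebra.
From mathcomp Require Import boolp classical_sets cardinality reals.
Set Implicit Arguments. Unset Strict Implicit. Unset Printing Implicit Defensive.
Import Order.TTheory GRing.Theory Num.Theory.
Local Open Scope ring_scope.
Local Open Scope classical_set_scope.

Definition vec (R : realType) (d : nat) := 'I_d -> R.

(* d_max(x,y) = max_i |x_i - y_i|  (= 0 when d = 0) *)
Definition dmax (R : realType) (d : nat) (x y : vec R d) : R :=
  \big[Num.max/0]_(i < d) `|x i - y i|.

Definition strict_pairwise_bound (R : realType) (d : nat) (D : R) (X : set (vec R d)) :=
  forall x y, X x -> X y -> dmax x y < D.

Definition mclosure (R : realType) (d : nat) (X : set (vec R d)) : set (vec R d) :=
  [set p | forall e : R, 0 < e -> exists2 x, X x & dmax p x < e].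

Definition is_partition (R : realType) (d : nat) (P : set (set (vec R d))) :=
  [/\ (forall X, P X -> X !=set0),
      (forall X Y, P X -> P Y -> X `&` Y !=set0 -> X = Y) &
      (forall x : vec R d, exists2 X, P X & X x)].

Definition cube (R : realType) (d : nat) (alpha : vec R d) (D : R) : set (vec R d) :=
  [set x | forall i, alpha i <= x i <= alpha i + D].

Definition Nbar (R : realType) (d : nat) (P : set (set (vec R d))) (p : vec R d) :=
  [set X | P X /\ mclosure X p].

Definition adjacent (R : realType) (d : nat) (X Y : set (vec R d)) :=
  mclosure X `&` mclosure Y !=set0.

Definition has_clique (R : realType) (d : nat) (P : set (set (vec R d))) (n : nat) :=
  exists f : 'I_n -> set (vec R d),
    [/\ injective f, (forall i, P (f i)) & (forall i j, adjacent (f i) (f j))].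

(* Main.v *)
Require Import Defs.
From HB Require Import structures.
From mathcomp Require Import all_boot all_order all_algebra.
From mathcomp Require Import zify.
From mathcomp Require Import boolp.

Module CombM.
Set Implicit Arguments. Unset Strict Implicit. Unset Printing Implicit Defensive.

Lemma inj_on_card (n : nat) (T : finType) (g : T -> nat) (A : {set T}) :
  #|A| = n -> (forall m, m < n -> exists2 j, j \in A & g j = m) ->
  {in A &, injective g}.
Proof.
move=> cA onto.
pose h (j : T) : 'I_n.+1 := inord (g j).
have sub : [set m : 'I_n.+1 | m < n] \subset h @: A.
  apply/subsetP => m; rewrite inE => mn.
  have [j jA gj] := onto _ mn.
  apply/imsetP; exists j => //; apply/val_inj; rewrite /h /= inordK // gj; lia.
have cs : #|[set m : 'I_n.+1 | m < n]| = n.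

  have -> : [set m : 'I_n.+1 | m < n] = [set widen_ord (leqnSn n) i | i : 'I_n].
    apply/setP => m; rewrite inE; apply/idP/imsetP => [mn|[i _ ->]]; last by rewrite /= ltn_ord.
    by exists (Ordinal mn) => //; apply/val_inj.
  rewrite card_imset ?card_ord //.
  by move=> a b /(congr1 val) /= /val_inj.
have : #|h @: A| == #|A|.
  rewrite eqn_leq leq_imset_card /= cA.
  by have := subset_leq_card sub; rewrite cs.
move/imset_injP => hinj a b aA bA gab; apply: hinj => //.
by rewrite /h gab.
Qed.

Lemma local_parity (n : nat) (g : 'I_n.+1 -> nat) :
  (forall j, g j <= n) ->
  odd #|[set k | [forall m : 'I_n, exists j : 'I_n.+1, (j != k) && (g j == m)]]|
  = [forall m : 'I_n.+1, exists j, g j == m].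
Proof.
move=> gle.
set S := [set k | _].
have doorP k : reflect (forall m, m < n -> exists2 j, j != k & g j = m) (k \in S).
  rewrite inE; apply: (iffP forallP) => [H m mn|H m].
    by have /existsP[j /andP[jk /eqP gj]] := H (Ordinal mn); exists j.
  have [j jk gj] := H m (ltn_ord m); apply/existsP; exists j; rewrite jk gj /=.
  by [].
case: (boolP [forall m : 'I_n.+1, exists j, g j == m]) => [/forallP fullH|nfull].
  have onto m : m < n.+1 -> exists2 j, j \in [set: 'I_n.+1] & g j = m.
    move=> mn; have /existsP[j /eqP gj] := fullH (Ordinal mn); by exists j.
  have cT : #|[set: 'I_n.+1]| = n.+1 by rewrite cardsT card_ord.
  have ginj := inj_on_card cT onto.
  have [k0 _ gk0] := onto n (ltnSn n).
  have -> : S = [set k0].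
    apply/setP => k; rewrite in_set1; apply/doorP/eqP => [H|->].
      apply/eqP/negPn/negP => kk0.
      have gkn : g k < n.
        have := gle k; rewrite leq_eqVlt => /orP[/eqP gkn|//].
        by case/eqP: kk0; apply: ginj; rewrite ?inE // gkn gk0.
      have [j jk gj] := H _ gkn.
      by case/eqP: jk; apply: ginj; rewrite ?inE.
    move=> m mn; have [j _ gj] := onto m (ltnW mn); exists j => //.
    by apply/eqP => jk0; move: gj; rewrite jk0 gk0 => mn'; lia.
  by rewrite cards1.
apply/negbTE.
case: (set_0Vmem S) => [->|[k1 k1S]]; first by rewrite cards0.
have allsmall j : g j < n.
  have := gle j; rewrite leq_eqVlt => /orP[/eqP gjn|//].
  case/negP: nfull; apply/forallP => m; apply/existsP.
  have [mn|] := ltnP m n.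
    by have [j' _ gj'] := doorP k1 k1S m mn; exists j'; rewrite gj'.
  move=> nm; exists j; apply/eqP; rewrite gjn; have := ltn_ord m; lia.
have cA : #|~: [set k1]| = n by rewrite cardsC1 card_ord.
have onto m : m < n -> exists2 j, j \in ~: [set k1] & g j = m.
  move=> mn; have [j jk gj] := doorP k1 k1S m mn; exists j => //.
  by rewrite !inE.
have ginj := inj_on_card cA onto.
have [j2 j2k1 gj2] := doorP k1 k1S _ (allsmall k1).
have -> : S = [set k1; j2].
  apply/setP => k; rewrite in_set2; apply/idP/idP.
    move=> kS; apply/negPn/negP; rewrite negb_or => /andP[kk1 kj2].
    have [j jk gj] := doorP k kS _ (allsmall k).
    case: (eqVneq j k1) => [jk1|jk1].
      case/negP: kj2; apply/eqP; apply: ginj; rewrite ?inE //.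
      by rewrite gj2 -gj jk1.
    by case/negP: jk; apply/eqP; apply: ginj; rewrite ?inE.
  case/orP=> /eqP ->; first by [].
  apply/doorP => m mn; have [j jk gj] := doorP k1 k1S m mn.
  case: (eqVneq j j2) => [jj2|jj2]; last by exists j.
  by exists k1; [rewrite eq_sym | rewrite -gj2 -gj jj2].
by rewrite cards2 eq_sym j2k1.
Qed.

Lemma inv_even (T : finType) (f : T -> T) (A : {set T}) :
  (forall x, x \in A -> [/\ f x \in A, f (f x) = x & f x != x]) -> ~~ odd #|A|.
Proof.
have main : forall n (A : {set T}), #|A| <= n ->
  (forall x, x \in A -> [/\ f x \in A, f (f x) = x & f x != x]) -> ~~ odd #|A|.
  elim=> [|n IH] B.
    by rewrite leqn0 => /eqP ->.
  move=> Bn HB.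
  case: (set_0Vmem B) => [->|[a aB]]; first by rewrite cards0.
  have [faB ffa fan] := HB a aB.
  have E : #|B| = (#|B :\: [set a; f a]|).+2.
    rewrite -(cardsID [set a; f a] B).
    have -> : B :&: [set a; f a] = [set a; f a].
      by apply/setIidPr/subsetP => y; rewrite !inE => /orP[] /eqP ->.
    by rewrite cards2 eq_sym fan.
  rewrite E /= negbK; apply: IH; first by move: Bn; rewrite E; lia.
  move=> x; rewrite !inE negb_or => /andP[/andP[xa xfa] xB].
  have [fxB ffx fxn] := HB x xB.
  split => //.
  rewrite fxB andbT negb_or; apply/andP; split; apply/eqP => e.
    by case/eqP: xfa; rewrite -ffx e.
  by case/eqP: xa; rewrite -ffx e ffa.
by move=> H; apply: (main #|A|).
Qed.

Section Comb.
Variable N : nat.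
Hypothesis N_gt0 : 0 < N.

Definition simp (d : nat) := ({ffun 'I_d -> 'I_N.+1} * {ffun 'I_d -> 'I_d.+1})%type.
Definition valid d (s : simp d) :=
  [forall i, s.1 i < N] && [forall i, s.2 i < d] && injectiveb s.2.
Definition vert d (s : simp d) (k : nat) : 'I_d -> nat :=
  fun i => s.1 i + (s.2 i < k).
Definition door d (c : ('I_d -> nat) -> nat) (s : simp d) (k : 'I_d.+1) :=
  [forall m : 'I_d, exists j : 'I_d.+1, (j != k) && (c (vert s j) == m)].
Definition full d (c : ('I_d -> nat) -> nat) (s : simp d) :=
  [forall m : 'I_d.+1, exists j : 'I_d.+1, c (vert s j) == m].
Definition good d (c : ('I_d -> nat) -> nat) :=
  forall w : 'I_d -> nat, (forall i, w i <= N) ->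
  [/\ c w <= d, forall i : 'I_d, w i = 0 -> c w != i
    & forall i : 'I_d, w i = N -> c w <= i].

Definition nb d (x : simp d * 'I_d.+1) : simp d * 'I_d.+1 :=
  let: ((v, r), k) := x in
  if k == 0 :> nat then
    if [forall i, (r i == 0 :> nat) ==> (v i + 1 < N)] then
      (([ffun i => if r i == 0 :> nat then inord (v i + 1) else v i],
        [ffun i => if r i == 0 :> nat then inord d.-1 else inord (r i).-1]), ord_max)
    else x
  else if k == d :> nat then
    if [forall i, (r i == d.-1 :> nat) ==> (0 < v i)] then
      (([ffun i => if r i == d.-1 :> nat then inord (v i).-1 else v i],
        [ffun i => if r i == d.-1 :> nat then ord0 else inord (r i).+1]), ord0)
    else x
  else ((v, [ffun i => if r i == k.-1 :> nat then k
                       else if r i == k :> nat then inord k.-1 else r i]), k).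

Lemma validP d (s : simp d) :
  reflect [/\ forall i, s.1 i < N, forall i, s.2 i < d & injective s.2] (valid s).
Proof.
rewrite /valid; apply: (iffP idP).
  by case/andP => /andP[/forallP h1 /forallP h2] /injectiveP h3.
by case=> h1 h2 h3; rewrite (introT forallP h1) (introT forallP h2) (introT (injectiveP _) h3).
Qed.

Lemma card_lt n : #|[set m : 'I_n.+1 | m < n]| = n.
Proof.
have -> : [set m : 'I_n.+1 | m < n] = [set widen_ord (leqnSn n) i | i : 'I_n].
  apply/setP => m; rewrite inE; apply/idP/imsetP => [mn|[i _ ->]]; last by rewrite /= ltn_ord.
  by exists (Ordinal mn) => //; apply/val_inj.
rewrite card_imset ?card_ord //.
by move=> a b /(congr1 val) /= /val_inj.
Qed.

Lemma surj d (s : simp d) : valid s -> forall m, m < d -> exists i, s.2 i = m :> nat.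
Proof.
case/validP => _ h2 h3 m md.
have sub : s.2 @: [set: 'I_d] \subset [set m : 'I_d.+1 | m < d].
  by apply/subsetP => x /imsetP[i _ ->]; rewrite inE.
have := subset_cardP _ sub; rewrite card_lt card_imset // cardsT card_ord => /(_ erefl) E.
have : Ordinal (leqW md) \in s.2 @: [set: 'I_d] by rewrite E inE.
by case/imsetP => i _ /(congr1 val) /= ->; exists i.
Qed.

Ltac inordS := repeat match goal with
  |- context [nat_of_ord (@inord ?n ?m)] =>
     let E := fresh "E" in
     (have E : nat_of_ord (@inord n m) = m by rewrite inordK //; lia);
     rewrite E; clear E
  end.

Lemma nb_valid d (x : simp d * 'I_d.+1) : 0 < d -> valid x.1 -> valid (nb x).1.
Proof.
move=> d0; case: x => [[v r] k] /= /[dup] vs /validP[/= h1 h2 h3].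
rewrite /nb.
case: (k =P 0 :> nat) => k0.
  case: ifP => [/forallP H|//]; apply/validP; split => /=.
  - move=> i; rewrite ffunE; have := h1 i; have := H i.
    by case: (r i =P 0 :> nat) => /= ri h h'; inordS; lia.
  - move=> i; rewrite ffunE; have := h2 i.
    by case: (r i =P 0 :> nat) => /= ri h; inordS; lia.
  - move=> a b /(congr1 (@nat_of_ord _)); rewrite !ffunE.
    have := h2 a; have := h2 b.
    case: (r a =P 0 :> nat); case: (r b =P 0 :> nat) => rb ra ha hb; inordS;
      by move=> E; apply: h3; apply/val_inj; simpl in *; lia.
case: (k =P d :> nat) => kd.
  case: ifP => [/forallP H|//]; apply/validP; split => /=.
  - move=> i; rewrite ffunE; have := h1 i; have := H i.
    by case: (r i =P d.-1 :> nat) => /= ri h h'; inordS; lia.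
  - move=> i; rewrite ffunE; have := h2 i.
    by case: (r i =P d.-1 :> nat) => /= ri h; simpl; inordS; lia.
  - move=> a b /(congr1 (@nat_of_ord _)); rewrite !ffunE.
    have := h2 a; have := h2 b.
    case: (r a =P d.-1 :> nat); case: (r b =P d.-1 :> nat) => rb ra ha hb; inordS;
      by move=> E; apply: h3; apply/val_inj; simpl in *; lia.
have kd' : k < d by have := ltn_ord k; lia.
apply/validP; split => //=.
- move=> i; rewrite ffunE; have := h2 i.
  by case: (r i =P k.-1 :> nat) => ri; case: (r i =P k :> nat) => rk h; inordS; lia.
- move=> a b /(congr1 (@nat_of_ord _)); rewrite !ffunE.
  have := h2 a; have := h2 b.
  case: (r a =P k.-1 :> nat) => ra1; case: (r a =P k :> nat) => ra2;
  case: (r b =P k.-1 :> nat) => rb1; case: (r b =P k :> nat) => rb2 ha hb;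
  inordS;
  by move=> E; apply: h3; apply/val_inj; simpl in *; lia.
Qed.

Lemma nb_invol d (x : simp d * 'I_d.+1) : 0 < d -> valid x.1 -> nb (nb x) = x.
Proof.
move=> d0; case: x => [[v r] k] /validP[/= h1 h2 h3].
case: (k =P 0 :> nat) => k0.
  case: (boolP [forall i, (r i == 0 :> nat) ==> (v i + 1 < N)]) => H; last first.
    have E : nb (v, r, k) = (v, r, k) by rewrite /nb k0 eqxx (negbTE H).
    by rewrite E.
  rewrite /nb /= ifF; last by apply/negbTE; lia.
  rewrite eqxx ifT; last first.
    apply/forallP => i; rewrite !ffunE; have := h2 i; have := h1 i.
    by case: (r i =P 0 :> nat) => ri hi hi'; inordS; apply/implyP => /= hh; inordS; lia.
  congr (_, _, _).
  - apply/ffunP => i; rewrite !ffunE; apply/val_inj; have := h2 i; have := h1 i.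
    by case: (r i =P 0 :> nat) => ri /= h h'; inordS; rewrite /= ?ri ?eqxx; inordS; 
       try (rewrite ifF; last (apply/negbTE; lia)); simpl; inordS; lia.
  - apply/ffunP => i; rewrite !ffunE; apply/val_inj; have := h2 i.
    by case: (r i =P 0 :> nat) => ri /= h; inordS; rewrite /= ?ri ?eqxx; inordS; 
       try (rewrite ifF; last (apply/negbTE; lia)); simpl; inordS; lia.
  - by apply/val_inj; rewrite /= k0.
case: (k =P d :> nat) => kd.
  case: (boolP [forall i, (r i == d.-1 :> nat) ==> (0 < v i)]) => H; last first.
    rewrite /nb; have -> : (k == 0 :> nat) = false by apply/eqP.
    by rewrite kd eqxx (negbTE H).
  move/forallP: H => H.
  rewrite /nb /= ifT; last first.
    apply/forallP => i; rewrite !ffunE; have := h2 i; have := h1 i; have := H i.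
    by case: (r i =P d.-1 :> nat) => ri /= hi hi' hi''; inordS; apply/implyP => /= hh; inordS; lia.
  congr (_, _, _).
  - apply/ffunP => i; rewrite !ffunE; apply/val_inj; have := h2 i; have := h1 i; have := H i.
    by case: (r i =P d.-1 :> nat) => ri /= h h' h''; inordS; rewrite /= ?ri ?eqxx; inordS; 
       try (rewrite ifF; last (apply/negbTE; lia)); simpl; inordS; lia.
  - apply/ffunP => i; rewrite !ffunE; apply/val_inj; have := h2 i.
    by case: (r i =P d.-1 :> nat) => ri /= h; inordS; rewrite /= ?ri ?eqxx; inordS; 
       try (rewrite ifF; last (apply/negbTE; lia)); simpl; inordS; lia.
  - by apply/val_inj; rewrite /= kd.
have kd' : k < d by have := ltn_ord k; lia.
rewrite /nb /=.
have -> : (k == 0 :> nat) = false by apply/eqP.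
have -> : (k == d :> nat) = false by apply/eqP.
congr (_, _, _).
apply/ffunP => i; rewrite !ffunE; apply/val_inj; have := h2 i.
case: (r i =P k.-1 :> nat) => ri1; case: (r i =P k :> nat) => ri2 /= h; inordS; rewrite /= ?ri1 ?ri2 ?eqxx /=; inordS;
  try (rewrite ifF; last (apply/negbTE; lia)); simpl; inordS; try lia.
by rewrite ifF //; apply/eqP.
Qed.

Lemma nb_facet d (x : simp d * 'I_d.+1) : 0 < d -> valid x.1 ->
  forall j : 'I_d.+1, j != x.2 ->
  exists2 j' : 'I_d.+1, j' != (nb x).2 & vert (nb x).1 j' = vert x.1 j.
Proof.
move=> d0; case: x => [[v r] k] /validP[/= h1 h2 h3] j /= jk.
have jk' : j <> k :> nat by move=> e; case/eqP: jk; apply/val_inj.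
have jd := ltn_ord j.
rewrite /nb.
case: (k =P 0 :> nat) => k0.
  case: ifP => /forallP H /=; last by exists j.
  exists (inord j.-1).
    by apply/eqP => /(congr1 (@nat_of_ord _)) /=; inordS; lia.
  apply: funext => i; rewrite /vert !ffunE /=; have := h1 i; have := h2 i; have := H i.
  by case: (r i =P 0 :> nat) => /= ri hi hi' hi''; inordS; lia.
case: (k =P d :> nat) => kd.
  case: ifP => /forallP H /=; last by exists j.
  exists (inord j.+1).
    by apply/eqP => /(congr1 (@nat_of_ord _)) /=; inordS; lia.
  apply: funext => i; rewrite /vert !ffunE /=; have := h1 i; have := h2 i; have := H i.
  by case: (r i =P d.-1 :> nat) => /= ri hi hi' hi''; inordS; lia.
exists j => //=.
apply: funext => i; rewrite /vert !ffunE /=; have := h2 i; have := ltn_ord k.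
by case: (r i =P k.-1 :> nat) => ri1; case: (r i =P k :> nat) => ri2 /= hi hk; inordS; lia.
Qed.

Lemma door_nb d c (x : simp d * 'I_d.+1) : 0 < d -> valid x.1 ->
  door c x.1 x.2 -> door c (nb x).1 (nb x).2.
Proof.
move=> d0 vx /forallP D; apply/forallP => m.
have /existsP[j /andP[jk /eqP cj]] := D m.
have [j' j'n E] := nb_facet d0 vx jk.
by apply/existsP; exists j'; rewrite j'n E cj /=.
Qed.

Lemma vert_grid d (s : simp d) : valid s -> forall j i, vert s j i <= N.
Proof.
case/validP => h1 _ _ j i; rewrite /vert; have := h1 i.
by case: (s.2 i < j) => /=; lia.
Qed.

Lemma matched_even d c : 0 < d ->
  ~~ odd #|[set x : simp d * 'I_d.+1 | valid x.1 && door c x.1 x.2 && (nb x != x)]|.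
Proof.
move=> d0; apply: (@inv_even _ (@nb d)) => x; rewrite !inE => /andP[/andP[vx dx] nx].
have inv := nb_invol d0 vx.
by rewrite nb_valid // door_nb // inv eq_sym nx.
Qed.

Lemma sum_parity d c : good c ->
  odd #|[set x : simp d * 'I_d.+1 | valid x.1 && door c x.1 x.2]| =
  odd #|[set s : simp d | valid s && full c s]|.
Proof.
move=> gc.
have E1 : #|[set x : simp d * 'I_d.+1 | valid x.1 && door c x.1 x.2]| =
   \sum_(s : simp d) \sum_(k : 'I_d.+1) (if valid s && door c s k then 1 else 0).
  rewrite pair_big /= -sum1_card big_mkcond /=.
  by apply: eq_bigr => x _; rewrite inE.
have E3 : #|[set s : simp d | valid s && full c s]| =
   \sum_(s : simp d) (valid s && full c s : nat).
  rewrite -sum1_card big_mkcond /=.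
  by apply: eq_bigr => x _; rewrite inE; case: (_ && _).
have E2 : (\sum_(s : simp d) \sum_(k : 'I_d.+1) (if valid s && door c s k then 1 else 0)) %% 2 =
          (\sum_(s : simp d) (valid s && full c s : nat)) %% 2.
  have H : forall s : simp d, (\sum_(k : 'I_d.+1) (if valid s && door c s k then 1 else 0)) %% 2
        = (valid s && full c s : nat) %% 2.
    move=> s.
    case vs: (valid s) => /=; last by rewrite big1.
    have -> : \sum_(k : 'I_d.+1) (if door c s k then 1 else 0) = #|[set k | door c s k]|.
      rewrite -sum1_card [RHS]big_mkcond /=.
      by apply: eq_bigr => x _; rewrite inE.
    rewrite modn2 /door local_parity; last by move=> j; have [] := gc _ (vert_grid vs j).
    by rewrite -/(full c s); case: (full c s).
  rewrite -[LHS]modn_summ -[RHS]modn_summ; apply: (congr1 (modn^~ 2)); apply: eq_bigr => s _; exact: H.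
move: E2; rewrite -E1 -E3 !modn2.
by case: (odd _); case: (odd _).
Qed.

Definition ext d' (w : 'I_d' -> nat) : 'I_d'.+1 -> nat :=
  fun i => if unlift ord_max i is Some j then w j else N.
Definition cres d' (c : ('I_d'.+1 -> nat) -> nat) : ('I_d' -> nat) -> nat :=
  fun w => c (ext w).
Definition rho d' (s : simp d'.+1) : simp d' :=
  ([ffun i => s.1 (lift ord_max i)], [ffun i => inord (s.2 (lift ord_max i)).-1]).
Definition lft d' (s : simp d') : simp d'.+1 :=
  ([ffun i => if unlift ord_max i is Some j then s.1 j else inord N.-1],
   [ffun i => if unlift ord_max i is Some j then inord (s.2 j).+1 else ord0]).

Lemma good_cres d' c : good c -> good (@cres d' c).
Proof.
move=> gc w wN.
have eN : forall i, ext w i <= N.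
  by move=> i; rewrite /ext; case: (unliftP ord_max i) => [j _|_] //.
have [c1 c2 c3] := gc _ eN.
split.
- have := c3 ord_max; rewrite /ext unlift_none /= => /(_ erefl).
  by rewrite /cres /ext.
- move=> i wi0; have := c2 (lift ord_max i); rewrite /ext liftK lift_max => /(_ wi0).
  by rewrite /cres /ext.
- move=> i wiN; have := c3 (lift ord_max i); rewrite /ext liftK lift_max => /(_ wiN).
  by rewrite /cres /ext.
Qed.

Lemma rmax_pos d' (s : simp d'.+1) : valid s -> s.2 ord_max = 0 :> nat ->
  forall j : 'I_d', 0 < s.2 (lift ord_max j).
Proof.
case/validP => _ _ h3 rm j; rewrite lt0n; apply/eqP => e.
have : lift ord_max j = ord_max by apply: h3; apply/val_inj; rewrite /= e rm.
by move/eqP; rewrite eq_sym (negbTE (neq_lift _ _)).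
Qed.

Lemma vert_rho d' (s : simp d'.+1) : valid s -> s.2 ord_max = 0 :> nat ->
  s.1 ord_max = N.-1 :> nat ->
  forall j : nat, ext (vert (rho s) j) = vert s j.+1.
Proof.
move=> vs rm vm j; apply: funext => i; rewrite /ext /vert.
case: (unliftP ord_max i) => [i0 ->|->]; last by rewrite rm vm /=; lia.
rewrite !ffunE /=; have := rmax_pos vs rm i0; case/validP: vs => _ h2 _.
have := h2 (lift ord_max i0) => h h'; inordS; lia.
Qed.

Lemma rho_valid d' (s : simp d'.+1) : valid s -> s.2 ord_max = 0 :> nat -> valid (rho s).
Proof.
move=> vs rm; have pos := rmax_pos vs rm; case/validP: vs => h1 h2 h3.
apply/validP; split => /=.
- by move=> i; rewrite ffunE.
- by move=> i; rewrite ffunE; have := h2 (lift ord_max i); have := pos i => h h'; inordS; lia.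
- move=> a b /(congr1 (@nat_of_ord _)); rewrite !ffunE.
  have := h2 (lift ord_max a); have := h2 (lift ord_max b); have := pos a; have := pos b.
  move=> pa pb ha hb; inordS => E.
  have : lift ord_max a = lift ord_max b by apply: h3; apply/val_inj => /=; lia.
  exact: lift_inj.
Qed.

Lemma lft_spec d' (s : simp d') : valid s ->
  [/\ valid (lft s), (lft s).2 ord_max = 0 :> nat, (lft s).1 ord_max = N.-1 :> nat
    & rho (lft s) = s].
Proof.
case/validP => h1 h2 h3; split.
- apply/validP; split => /=.
  + move=> i; rewrite ffunE; case: (unliftP ord_max i) => [j _|_] //.
    by inordS; lia.
  + move=> i; rewrite ffunE; case: (unliftP ord_max i) => [j _|_] //.
    by move: (h2 j) => hj; inordS; lia.
  + move=> a b; rewrite !ffunE.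
    case: (unliftP ord_max a) => [ja ->|->]; case: (unliftP ord_max b) => [jb ->|->] //.
    * move/(congr1 (@nat_of_ord _)); move: (h2 ja) (h2 jb) => ha hb; inordS => E.
      by congr (lift _ _); apply: h3; apply/val_inj => /=; lia.
    * by move/(congr1 (@nat_of_ord _)); move: (h2 ja) => ha; inordS.
    * by move/(congr1 (@nat_of_ord _)); move: (h2 jb) => hb; inordS.
- by rewrite /= ffunE unlift_none.
- by rewrite /= ffunE unlift_none; inordS.
- case: s h1 h2 h3 => v r h1 h2 h3.
  congr (_, _); apply/ffunP => i; rewrite !ffunE liftK //.
  by apply: ord_inj; move: (h2 i) => /= hi; inordS; lia.
Qed.

Lemma lft_rho d' (s : simp d'.+1) : valid s -> s.2 ord_max = 0 :> nat ->
  s.1 ord_max = N.-1 :> nat -> lft (rho s) = s.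
Proof.
move=> vs rm vm; have pos := rmax_pos vs rm; case/validP: vs => h1 h2 h3.
case: s rm vm pos h1 h2 h3 => v r /= rm vm pos h1 h2 h3.
congr (_, _); apply/ffunP => i; rewrite !ffunE.
  case: (unliftP ord_max i) => [j ->|->]; rewrite ?ffunE //.
  by apply: ord_inj; inordS; exact/esym.
case: (unliftP ord_max i) => [j ->|->]; rewrite ?ffunE //; apply: ord_inj.
  set l := lift _ j; have pj : 0 < r l by rewrite /l; exact: pos.
  by move: (h2 l) => hj /=; inordS; lia.
by rewrite rm.
Qed.

Lemma unmatched_shape d' c (s : simp d'.+1) (k : 'I_d'.+2) : good c -> valid s ->
  door c s k -> nb (s, k) = (s, k) ->
  [/\ k = ord0, s.2 ord_max = 0 :> nat & s.1 ord_max = N.-1 :> nat].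
Proof.
move=> gc vs /forallP dk; have vg := vert_grid vs.
have kl := ltn_ord k.
case: s vs dk vg => v r vs dk vg; have /validP[/= h1 h2 h3] := vs.
rewrite /nb.
case: (k =P 0 :> nat) => k0.
  case: ifP => [_ [] _ _ /(congr1 (@nat_of_ord _)) /=|]; first by lia.
  move/negbT/forallPn => [i]; rewrite negb_imply => /andP[/eqP ri0 vi] _.
  have /existsP[j /andP[jk /eqP cj]] := dk ord_max.
  have jn : j <> 0 :> nat by move=> e; case/eqP: jk; apply: ord_inj; rewrite e k0.
  have [_ _ c3] := gc _ (vg j).
  have vji : vert (v, r) j i = N by rewrite /vert /= ri0; have := h1 i; lia.
  have := c3 i vji; rewrite cj /= => di.
  have im : i = ord_max by apply: ord_inj => /=; have := ltn_ord i; lia.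
  split; first by apply: ord_inj.
  - by rewrite -im.
  - by rewrite -im /=; have := h1 i; lia.
case: (k =P d'.+1 :> nat) => kd.
  case: ifP => [_ [] _ _ /(congr1 (@nat_of_ord _)) /=|]; first by lia.
  move/negbT/forallPn => [i]; rewrite negb_imply => /andP[/eqP ri0 vi] _.
  have /existsP[j /andP[jk /eqP cj]] := dk i.
  have jn : j <> d'.+1 :> nat by move=> e; case/eqP: jk; apply: ord_inj; rewrite e kd.
  have [_ c2 _] := gc _ (vg j).
  have vji : vert (v, r) j i = 0.
    rewrite /vert /= ri0; have := ltn_ord j; move: vi; rewrite lt0n negbK => /eqP ->; lia.
  by have := c2 i vji; rewrite cj eqxx.
case=> E.
have [i ri] : exists i, r i = k :> nat by apply: (surj vs); lia.
have := congr1 (fun f : {ffun _ -> _} => nat_of_ord (f i)) E; rewrite /= ffunE ri eqxx.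
by case: ifP => [/eqP|_]; inordS; lia.
Qed.

Lemma unmatched_card d' (c : ('I_d'.+1 -> nat) -> nat) : good c ->
  #|[set x : simp d'.+1 * 'I_d'.+2 | valid x.1 && door c x.1 x.2 && (nb x == x)]| =
  #|[set s : simp d' | valid s && full (cres c) s]|.
Proof.
move=> gc.
set A := [set s : simp d'.+1 | valid s && (s.2 ord_max == 0 :> nat)
           && (s.1 ord_max == N.-1 :> nat) && door c s ord0].
have E1 : [set x : simp d'.+1 * 'I_d'.+2 | valid x.1 && door c x.1 x.2 && (nb x == x)]
          = [set (s, ord0) | s in A].
  apply/setP => -[s k]; rewrite inE /=; apply/idP/imsetP.
    case/andP=> /andP[vs dk] /eqP E.
    have [ek rm vm] := unmatched_shape gc vs dk E; subst k.
    by exists s => //; rewrite inE vs dk /= rm vm !eqxx.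
  case=> s' /[swap] -[-> ->]; rewrite inE => /andP[/andP[/andP[vs /eqP rm] /eqP vm] dk].
  rewrite vs dk /=; apply/eqP.
  case: s' vs rm vm dk => v r vs rm vm dk.
  rewrite /nb /= ifF //; apply/negbTE/forallP => H.
  by have := H ord_max; rewrite /= rm eqxx /= vm; have := N_gt0; lia.
have E2 : [set s : simp d' | valid s && full (cres c) s] = (@rho d') @: A.
  apply/setP => s'; rewrite inE; apply/idP/imsetP.
    case/andP => vs' /forallP fs'.
    have [vl rm vm rl] := lft_spec vs'.
    exists (lft s') => //.
    rewrite inE vl rm vm !eqxx /=; apply/forallP => m.
    have /existsP[j /eqP cj] := fs' m.
    have nl : lift ord0 j != ord0 by rewrite eq_sym neq_lift.
    apply/existsP; exists (lift ord0 j); rewrite nl /=.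
    have -> : bump 0 j = j.+1 by [].
    by rewrite -(vert_rho vl rm vm) rl; apply/eqP.
  case=> s; rewrite inE => /andP[/andP[/andP[vs /eqP rm] /eqP vm] /forallP dk] ->.
  rewrite rho_valid //=; apply/forallP => m.
  have /existsP[j /andP[jk /eqP cj]] := dk m.
  case: (unliftP ord0 j) jk cj => [j' ->|->]; last by rewrite eqxx.
  move=> _ cj; apply/existsP; exists j'.
  by rewrite /cres (vert_rho vs rm vm) -cj lift0.
rewrite E1 E2 card_imset; last by move=> a b [].
rewrite card_in_imset // => a b; rewrite !inE => /andP[/andP[/andP[va /eqP ra] /eqP wa] _].
move=> /andP[/andP[/andP[vb /eqP rb] /eqP wb] _] E.
by rewrite -(lft_rho va ra wa) -(lft_rho vb rb wb) E.
Qed.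

Theorem comb_odd d (c : ('I_d -> nat) -> nat) : good c ->
  odd #|[set s : simp d | valid s && full c s]|.
Proof.
elim: d c => [|d' IH] c gc.
  have -> : [set s : simp 0 | valid s && full c s] = setT.
    apply/setP => s; rewrite !inE; apply/andP; split.
      by apply/validP; split => [[]|[]|[]].
    apply/forallP => m; apply/existsP; exists ord0.
    have [c1 _ _] := gc (vert s 0) (fun i => match i with Ordinal _ h => False_ind _ (notF h) end).
    by move: c1; rewrite leqn0 => /eqP ->; case: m => -[].
  by rewrite cardsT card_prod !card_ffun !card_ord.
rewrite -sum_parity //.
rewrite -(cardsID [set x | nb x != x]).
have -> : [set x : simp d'.+1 * 'I_d'.+2 | valid x.1 && door c x.1 x.2] :&: [set x | nb x != x]
   = [set x | valid x.1 && door c x.1 x.2 && (nb x != x)].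
  by apply/setP => x; rewrite !inE.
have -> : [set x : simp d'.+1 * 'I_d'.+2 | valid x.1 && door c x.1 x.2] :\: [set x | nb x != x]
   = [set x | valid x.1 && door c x.1 x.2 && (nb x == x)].
  by apply/setP => x; rewrite !inE negbK andbC.
rewrite oddD (negbTE (matched_even _ _)) // unmatched_card //.
exact: IH (good_cres gc).
Qed.
End Comb.

Unset Implicit Arguments.
End CombM.
Import CombM.

From mathcomp Require Import boolp classical_sets cardinality reals.
From mathcomp Require Import lra ring.

Import Order.TTheory GRing.Theory Num.Theory.
Local Open Scope ring_scope.
Local Open Scope classical_set_scope.

Section Geo.
Variable R : realType.
Variable d : nat.
Implicit Types x y z : vec R d.

Lemma dmax_ge x y (i : 'I_d) : `|x i - y i| <= dmax x y.
Proof.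
rewrite /dmax (bigD1 i) //= le_max lexx //.
Qed.

Lemma dmax_ge0 x y : 0 <= dmax x y.
Proof.
by rewrite /dmax; apply: (big_ind (fun t => 0 <= t)) => // a b ha hb; rewrite le_max ha.
Qed.

Lemma dmax_lt x y (e : R) : 0 < e -> (forall i, `|x i - y i| < e) -> dmax x y < e.
Proof.
move=> e0 H; rewrite /dmax; apply: (big_ind (fun t => t < e)) => // a b ha hb.
by rewrite gt_max ha hb.
Qed.

Lemma dmax_le x y (e : R) : 0 <= e -> (forall i, `|x i - y i| <= e) -> dmax x y <= e.
Proof.
move=> e0 H; rewrite /dmax; apply: (big_ind (fun t => t <= e)) => // a b ha hb.
by rewrite ge_max ha hb.
Qed.

Lemma dmaxC x y : dmax x y = dmax y x.
Proof. by rewrite /dmax; apply: eq_bigr => i _; rewrite distrC. Qed.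

Lemma dmax_triangle x y z : dmax x z <= dmax x y + dmax y z.
Proof.
apply: dmax_le; first by rewrite addr_ge0 // dmax_ge0.
move=> i; apply: le_trans (ler_distD (y i) (x i) (z i)) _.
by rewrite lerD // dmax_ge.
Qed.


Lemma min_pos (T : eqType) (s : seq T) (F : T -> R) :
  (forall t, t \in s -> 0 < F t) -> exists2 e : R, 0 < e & forall t, t \in s -> e <= F t.
Proof.
elim: s => [|a s IH] H; first by exists 1.
have [e e0 He] : exists2 e : R, 0 < e & forall t, t \in s -> e <= F t.
  by apply: IH => t ts; apply: H; rewrite inE ts orbT.
have Fa : 0 < F a by apply: H; rewrite inE eqxx.
exists (Num.min (F a) e); first by rewrite lt_min Fa e0.
move=> t; rewrite inE => /orP[/eqP ->|ts]; first by rewrite ge_min lexx.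
by rewrite ge_min He ?orbT.
Qed.

Definition box (a : vec R d) (s : R) (q : vec R d) := forall i, a i <= q i <= a i + s.

Definition subb (a : vec R d) (s : R) (b : {ffun 'I_d -> bool}) : vec R d :=
  fun i => a i + (s / 2) * (b i)%:R.

Section Bisect.
Variable Phi : vec R d -> R -> Prop.
Hypothesis mono : forall q e e', Phi q e -> e <= e' -> Phi q e'.

Definition Good a s := forall e : R, 0 < e -> exists q, box a s q /\ Phi q e.

Lemma split_good a s : 0 < s -> Good a s -> exists b, Good (subb a s b) (s / 2).
Proof.
move=> s0 G; apply: contrapT => /forallNP H.
have H' : forall b : {ffun 'I_d -> bool}, exists e : R,
    0 < e /\ forall q, box (subb a s b) (s / 2) q -> ~ Phi q e.
  move=> b; have /existsNP[e /not_implyP[e0 /forallNP Hq]] := H b.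
  exists e; split => // q bq Pq; apply: (Hq q); split => //.
have [E HE] := choice H'.
have [e e0 He] := @min_pos _ (enum {ffun 'I_d -> bool}) E (fun b _ => (HE b).1).
have [q [bq Pq]] := G e e0.
pose b := [ffun i => a i + s / 2 <= q i].
have : box (subb a s b) (s / 2) q.
  move=> i; rewrite /subb /b ffunE; have /andP[q1 q2] := bq i.
  case h : (a i + s / 2 <= q i) => /=; rewrite ?mulr1n ?mulr0n ?mulr1 ?mulr0 ?addr0.
    by rewrite h /=; apply: le_trans q2 _; rewrite -addrA -splitr.
  by rewrite q1 /=; apply: ltW; rewrite ltNge h.
move/(HE b).2; apply; apply: mono Pq _.
by apply: He; rewrite mem_enum.
Qed.


Lemma half_exp (s : R) n : s / 2 ^+ n / 2 = s / 2 ^+ n.+1.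
Proof. by rewrite exprSr invfM mulrA. Qed.

Lemma bisect a s : 0 < s -> Good a s ->
  exists p, forall e : R, 0 < e -> exists q, dmax p q < e /\ Phi q e.
Proof.
move=> s0 G0.
pose hn (n : nat) : R := s / 2 ^+ n.
have hn0 n : 0 < hn n by rewrite /hn divr_gt0 // exprn_gt0.
have step : forall an : vec R d * nat, exists b : {ffun 'I_d -> bool},
    Good an.1 (hn an.2) -> Good (subb an.1 (hn an.2) b) (hn an.2.+1).
  move=> [a' n] /=; case: (pselect (Good a' (hn n))) => [G|nG].
    have [b Hb] := split_good a' (hn n) (hn0 n) G; exists b => _.
    by rewrite /hn -half_exp.
  by exists [ffun _ => false].
have /choice [g Hg] := step.
pose seqa := fix f (n : nat) : vec R d :=
  match n with 0 => a | n'.+1 => subb (f n') (hn n') (g (f n', n')) end.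
have seqa0 : seqa 0%N = a by [].
have seqaS n : seqa n.+1 = subb (seqa n) (hn n) (g (seqa n, n)) by [].
clearbody seqa.
have Gn : forall n, Good (seqa n) (hn n).
  elim=> [|n IH]; first by rewrite seqa0 /hn expr0 divr1.
  by rewrite seqaS; exact: (Hg (seqa n, n)).
have hS n : hn n.+1 = hn n / 2 by rewrite /hn half_exp.
have nest1 n i : seqa n i <= seqa n.+1 i /\ seqa n.+1 i + hn n.+1 <= seqa n i + hn n.
  rewrite seqaS /subb hS; have := hn0 n.
  case: (g (seqa n, n) i) => /= h; rewrite ?mulr1n ?mulr0n ?mulr1 ?mulr0 ?addr0; split.
  - by rewrite lerDl divr_ge0 // ltW.
  - by rewrite -addrA -splitr.
  - by [].
  - by rewrite lerD2l ler_pdivrMr // ler_pMr // ler1n.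
have nest n k i : seqa n i <= seqa (n + k)%N i /\ seqa (n + k)%N i + hn (n + k)%N <= seqa n i + hn n.
  elim: k => [|k [IH1 IH2]]; first by rewrite addn0.
  rewrite addnS; have [h1 h2] := nest1 (n + k)%N i; split.
    exact: le_trans IH1 h1.
  exact: le_trans h2 IH2.
pose p : vec R d := fun i => sup (range (fun n => seqa n i)).
have ub n i : forall m, seqa m i <= seqa n i + hn n.
  move=> m; case: (leqP n m) => [nm|mn].
    have [_ h2] := nest n (m - n)%N i.
    have e : (n + (m - n))%N = m by rewrite subnKC.
    rewrite e in h2.
    by apply: le_trans _ h2; rewrite lerDl ltW.
  have [h1 _] := nest m (n - m)%N i.
  have e : (m + (n - m))%N = n by rewrite subnKC // ltnW.
  rewrite e in h1.
  by apply: le_trans h1 _; rewrite lerDl ltW.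
have hs i : has_sup (range (fun n => seqa n i)).
  split; first by exists (seqa 0 i), 0%N.
  by exists (seqa 0 i + hn 0) => _ [m _ <-]; apply: ub.
have pbounds n i : seqa n i <= p i <= seqa n i + hn n.
  apply/andP; split.
    by apply: sup_upper_bound (hs i) _ _; exists n.
  apply: ge_sup; first by exists (seqa 0 i), 0%N.
  by move=> _ [m _ <-]; apply: ub.
exists p => e e0.
have [n hne] : exists n, hn n < e.
  pose k := Num.Def.archi_bound (s / e).
  have sk : s / e < k%:R by apply: archi_boundP; rewrite divr_ge0 // ltW.
  exists k; rewrite /hn ltr_pdivrMr ?exprn_gt0 // mulrC -ltr_pdivrMr //.
  apply: lt_trans sk _; rewrite -natrX ltr_nat; exact: ltn_expl.
have [q [bq Pq]] := Gn n e e0.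
exists q; split => //.
apply: dmax_lt => // i; have /andP[p1 p2] := pbounds n i; have /andP[q1 q2] := bq i.
rewrite ltr_norml; apply/andP; split; lra.
Qed.
End Bisect.

Section Main.
Variables (P : set (set (vec R d))) (D : R) (alpha : vec R d).
Hypotheses (Ppart : is_partition P) (D0 : 0 < D)
  (Pb : forall X, P X -> strict_pairwise_bound D X).

Lemma cover : forall x : vec R d, exists2 X, P X & X x.
Proof. by case: Ppart. Qed.

Definition memb (x : vec R d) : set (vec R d) := s2val (cid2 (cover x)).
Lemma memb_P x : P (memb x). Proof. exact: (s2valP (cid2 (cover x))). Qed.
Lemma memb_x x : memb x x. Proof. exact: (s2valP' (cid2 (cover x))). Qed.

Definition meets (X : set (vec R d)) (i : 'I_d) := exists y, X y /\ y i = alpha i.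
Definition Fcol (X : set (vec R d)) : nat :=
  find (fun i : 'I_d => ~~ `[< meets X i >]) (enum 'I_d).

Lemma Fcol_le X : (Fcol X <= d)%N.
Proof. by have := find_size (fun i : 'I_d => ~~ `[< meets X i >]) (enum 'I_d); rewrite size_enum_ord. Qed.

Lemma nth_enum_ordE (i : 'I_d) : nth i (enum 'I_d) i = i.
Proof. by apply: ord_inj; rewrite nth_enum_ord. Qed.

Lemma Fcol_meets X (i : 'I_d) : meets X i -> Fcol X != i.
Proof.
move=> mi; apply/eqP => E.
have hf : has (fun i : 'I_d => ~~ `[< meets X i >]) (enum 'I_d).
  by rewrite has_find size_enum_ord /Fcol -/(Fcol X) E.
have := nth_find i hf; rewrite -/(Fcol X) E nth_enum_ordE.
by move/asboolPn.
Qed.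

Lemma Fcol_nmeets X (i : 'I_d) : ~ meets X i -> (Fcol X <= i)%N.
Proof.
move=> nmi; rewrite leqNgt; apply/negP => lt.
have := before_find i lt; rewrite nth_enum_ordE => /negbFE /asboolP.
exact: nmi.
Qed.

Definition pt (N : nat) (w : 'I_d -> nat) : vec R d :=
  fun i => alpha i + D * (w i)%:R / N%:R.

Definition colr N (w : 'I_d -> nat) : nat := Fcol (memb (pt N w)).

Lemma pt_cube N (w : 'I_d -> nat) : (0 < N)%N -> (forall i, (w i <= N)%N) -> cube alpha D (pt N w).
Proof.
move=> N0 wN i; rewrite /pt; apply/andP; split.
  by rewrite lerDl divr_ge0 // ?mulr_ge0 // ltW.
rewrite lerD2l ler_pdivrMr ?ltr0n // ler_pM2l // ler_nat.
exact: wN.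
Qed.

Lemma colr_good N : (0 < N)%N -> good N (colr N).
Proof.
move=> N0 w wN; split.
- exact: Fcol_le.
- move=> i wi0; apply: Fcol_meets; exists (pt N w); split; first exact: memb_x.
  by rewrite /pt wi0 mulr0 mul0r addr0.
- move=> i wiN; apply: Fcol_nmeets => -[y [my yi]].
  have := Pb _ (memb_P (pt N w)) _ _ (memb_x (pt N w)) my.
  apply/negP; rewrite -leNgt; apply: le_trans (dmax_ge _ _ i).
  rewrite /pt wiN yi mulfK ?pnatr_eq0 -?lt0n // addrC addKr.
  by rewrite ger0_norm // ltW.
Qed.

Definition PhiM (q : vec R d) (e : R) :=
  exists f : 'I_d.+1 -> set (vec R d), injective f /\
    forall m, P (f m) /\ exists x, f m x /\ cube alpha D x /\ dmax q x < e.

Lemma PhiM_mono q e e' : PhiM q e -> e <= e' -> PhiM q e'.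
Proof.
move=> [f [fi Hf]] ee'; exists f; split => // m.
have [Pm [x [fx [cx dx]]]] := Hf m; split => //; exists x; split => //; split => //.
exact: lt_le_trans ee'.
Qed.

Lemma stepA : Good PhiM alpha D.
Proof.
move=> e e0.
pose N := (Num.Def.archi_bound (D / e)).+1.
have N0 : (0 < N)%N by [].
have DN : D / N%:R < e.
  have := archi_boundP (divr_ge0 (ltW D0) (ltW e0)) => h.
  rewrite ltr_pdivrMr ?ltr0n // mulrC -ltr_pdivrMr //.
  by apply: lt_trans h _; rewrite ltr_nat.
have := comb_odd N0 (colr_good N N0).
case: (set_0Vmem [set s : simp N d | valid s && full (colr N) s]) => [->|[s]].
  by rewrite cards0.
rewrite inE => /andP[vs /forallP fs] _.
have /choice [J HJ] : forall m : 'I_d.+1, exists j : 'I_d.+1, colr N (vert s j) = m.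
  by move=> m; have /existsP[j /eqP cj] := fs m; exists j.
have vg := vert_grid N0 vs.
have /validP[h1 _ _] := vs.
exists (pt N (fun i => s.1 i)); split.
  by apply: pt_cube => // i; apply: ltnW.
exists (fun m => memb (pt N (vert s (J m)))); split.
  move=> a b E; apply: ord_inj; rewrite -(HJ a) -(HJ b) /colr.
  by rewrite E.
move=> m; split; first exact: memb_P.
exists (pt N (vert s (J m))); split; first exact: memb_x.
split; first exact: pt_cube.
apply: dmax_lt => // i; apply: le_lt_trans DN.
rewrite /pt /vert natrD.
case: (s.2 i < J m)%N => /=; last first.
  by rewrite addr0 subrr normr0 divr_ge0 // ltW.
have -> : alpha i + D * (s.1 i)%:R / N%:R - (alpha i + D * ((s.1 i)%:R + 1) / N%:R)
  = - (D / N%:R) by ring.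
by rewrite normrN ger0_norm // divr_ge0 // ltW.
Qed.

End Main.
End Geo.

Lemma fin_seq (T : choiceType) (L : set T) (hL : finite_set L) :
  exists s : seq T, forall X, (X \in s) <-> L X.
Proof.
exists (finmap.enum_fset (fset_set L)) => X.
have E := in_fset_set hL X.
split => [H|H].
  have : X \in L by rewrite -E.
  by rewrite inE.
have : X \in L by rewrite inE.
by rewrite -E.
Qed.

Theorem mainTheorem5 (R : realType) (d : nat) (P : set (set (vec R d))) :
  is_partition P ->
  (exists D : R, [/\ 0 < D, (forall X, P X -> strict_pairwise_bound D X) &
     exists alpha : vec R d, finite_set [set X | P X /\ X `&` cube alpha D !=set0]]) ->
  (exists p : vec R d, exists f : 'I_d.+1 -> set (vec R d),
      injective f /\ forall i, Nbar P p (f i)) /\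
  has_clique P d.+1.
Proof.
move=> Ppart [D [D0 Pb [alpha Lfin]]].
have [p Hp] := @bisect R d (@PhiM R d P D alpha) (@PhiM_mono R d P D alpha) alpha D D0
  (@stepA R d P D alpha Ppart D0 Pb).
have near : forall e : R, 0 < e -> exists f : 'I_d.+1 -> set (vec R d), injective f /\
    forall m, P (f m) /\ exists x, f m x /\ cube alpha D x /\ dmax p x < e.
  move=> e e0; have e20 : 0 < e / 2 by rewrite divr_gt0.
  have [q [pq [f [fi Hf]]]] := Hp _ e20.
  exists f; split => // m; have [Pm [x [fx [cx qx]]]] := Hf m.
  split => //; exists x; split => //; split => //.
  apply: le_lt_trans (@dmax_triangle R d p q x) _.
  by rewrite [e]splitr ltrD.
have [sL sLP] := fin_seq _ _ Lfin.
pose Lp := undup [seq X <- sL | `[< mclosure X p >]].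
have Lp_big : (d.+1 <= size Lp)%N.
  rewrite leqNgt; apply/negP => small.
  have Ee : forall X : set (vec R d), exists e : R,
      0 < e /\ (~ mclosure X p -> forall x, X x -> e <= dmax p x).
    move=> X; case: (pselect (mclosure X p)) => [c|nc]; first by exists 1.
    move: nc; rewrite /mclosure /= => /existsNP [e /not_implyP [e0 H]].
    exists e; split => // _ x Xx; rewrite leNgt; apply/negP => lt; apply: H.
    by exists x.
  have /choice [E HE] := Ee.
  have [e0 e0p He0] := @min_pos R _ sL E (fun X _ => (HE X).1).
  have [f [fi Hf]] := near e0 e0p.
  have inLp : forall m, f m \in Lp.
    move=> m; have [Pm [x [fx [cx dx]]]] := Hf m.
    have fsL : f m \in sL by apply/sLP; split => //; exists x.
    rewrite mem_undup mem_filter fsL andbT; apply/asboolP.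
    apply: contrapT => nc; have h1 := (HE (f m)).2 nc x fx; have h2 := He0 _ fsL.
    by have := lt_le_trans dx (le_trans h2 h1); rewrite ltxx.
  have sub : {subset [seq f i | i <- enum 'I_d.+1] <= Lp}.
    by move=> X /mapP [m _ ->]; exact: inLp.
  have := @uniq_leq_size _ (map f (enum 'I_d.+1)) Lp.
  rewrite map_inj_uniq // enum_uniq size_map size_enum_ord => /(_ isT sub) h.
  by move: small; rewrite ltnNge h.
pose g (m : 'I_d.+1) := nth set0 Lp m.
have gi : injective g.
  move=> a b E; apply: ord_inj; apply/eqP.
  have ha : (a < size Lp)%N by exact: leq_trans (ltn_ord a) Lp_big.
  have hb : (b < size Lp)%N by exact: leq_trans (ltn_ord b) Lp_big.
  by rewrite -(nth_uniq set0 ha hb (undup_uniq _)); apply/eqP.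
have gP : forall m, P (g m) /\ mclosure (g m) p.
  move=> m; have : g m \in Lp by apply: mem_nth; exact: leq_trans (ltn_ord m) Lp_big.
  rewrite mem_undup mem_filter => /andP[/asboolP c /sLP [Pm _]].
  by split.
split.
  exists p, g; split; first exact: gi.
  by move=> i; have [] := gP i.
exists g; split; first exact: gi.
  by move=> i; have [] := gP i.
move=> i j; exists p; split.
  by have [] := gP i.
by have [] := gP j.
Qed.
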